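(* Let $m\ge 1$, $n\ge 2$, $d=(n-1)m$, let $\mathcal{H}\in\operatorname{H}^m(\mathbb{C}^n)$ with associated vector $h=(h_0,\dots,h_d)$, and regard $h$ as the symmetric binary tensor in $\operatorname{S}^d(\mathbb{C}^2)$ represented by the binary form $h(x,y)=\sum_{j=0}^d\binom{d}{j}h_jx^jy^{d-j}$. Then $\operatorname{rank}_V(\mathcal{H})=\operatorname{rank}_S(h)$ and $\underline{\operatorname{rank}}_V(\mathcal{H})=\underline{\operatorname{rank}}_S(h)$.
   Context: A tensor $\mathcal{H}\in\operatorname{T}^m(\mathbb{C}^n)$ is Hankel if there is a vector $h=(h_0,\dots,h_{(n-1)m})$ (the associated vector) with $\mathcal{H}_{i_1\dots i_m}=h_{i_1+\cdots+i_m-m}$ for all $1\le i_1,\dots,i_m\le n$; $\operatorname{H}^m(\mathbb{C}^n)$ is the space of such tensors. The binary form $h(x,y)$ is identified with the symmetric tensor $T\in\operatorname{S}^d(\mathbb{C}^2)$ whose entry $T_{i_1\dots i_d}$ ($i_k\in\{1,2\}$) equals $h_j$ where $j$ is the number of indices equal to $1$. Symmetric rank: $\operatorname{rank}_S(\mathcal{A})=\min\{r:\mathcal{A}=\sum_{i=1}^r u_i^{\otimes \mathrm{ord}}\}$; symmetric border rank $\underline{\operatorname{rank}}_S(\mathcal{A})$ is the least $r$ such that $\mathcal{A}$ is a limit of tensors of the form $\sum_{i=1}^r u_i^{\otimes \mathrm{ord}}$. Vandermonde rank $\operatorname{rank}_V(\mathcal{H})$: least $r$ with $\mathcal{H}=\sum_{i=1}^r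 (a_i^{n-1},a_i^{n-2}b_i,\dots,b_i^{n-1})^{\otimes m}$, $a_i,b_i\in\mathbb{C}$. Vandermonde border rank $\underline{\operatorname{rank}}_V(\mathcal{H})$: least $r$ such that $\mathcal{H}$ is a limit of Hankel tensors of Vandermonde rank at most $r$. *)

(* Defs.v *)
From Stdlib Require Import Reals List Arith.
Import ListNotations.
Open Scope R_scope.

Definition Cx : Type := (R * R)%type.
Definition C0 : Cx := (0, 0).
Definition C1 : Cx := (1, 0).
Definition Cadd (z w : Cx) : Cx := (fst z + fst w, snd z + snd w).
Definition Copp (z : Cx) : Cx := (- fst z, - snd z).
Definition Cmul (z w : Cx) : Cx :=
  (fst z * fst w - snd z * snd w, fst z * snd w + snd z * fst w).
Fixpoint Cpow (z : Cx) (k : nat) : Cx :=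
  match k with O => C1 | S k' => Cmul z (Cpow z k') end.
Definition Cnorm (z : Cx) : R := sqrt (fst z * fst z + snd z * snd z).

Fixpoint Csum (r : nat) (f : nat -> Cx) : Cx :=
  match r with O => C0 | S r' => Cadd (Csum r' f) (f r') end.

Fixpoint Cprod_list (l : list nat) (v : nat -> Cx) : Cx :=
  match l with [] => C1 | i :: l' => Cmul (v i) (Cprod_list l' v) end.

(** Tensors of order [ord] over Cx^dim: functions on multi-indices
    (lists of length ord, entries in 1..dim, 1-based as in the paper). *)
Definition tensor := list nat -> Cx.

Definition valid_index (ord dim : nat) (l : list nat) : Prop :=
  length l = ord /\ Forall (fun i => (1 <= i <= dim)%nat) l.

Definition teq (ord dim : nat) (A B : tensor) : Prop :=
  forall l, valid_index ord dim l -> A l = B l.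

Definition tpow (u : nat -> Cx) : tensor := fun l => Cprod_list l u.

Definition tsum (r : nat) (T : nat -> tensor) : tensor :=
  fun l => Csum r (fun i => T i l).

Definition is_hankel_with (ord dim : nat) (H : tensor) (h : nat -> Cx) : Prop :=
  forall l, valid_index ord dim l -> H l = h (list_sum l - ord)%nat.

Definition is_hankel (ord dim : nat) (H : tensor) : Prop :=
  exists h, is_hankel_with ord dim H h.

Definition sym_decomp (ord dim : nat) (A : tensor) (r : nat) : Prop :=
  exists u : nat -> nat -> Cx, teq ord dim A (tsum r (fun i => tpow (u i))).

Definition is_rank_S (ord dim : nat) (A : tensor) (r : nat) : Prop :=
  sym_decomp ord dim A r /\ forall r', sym_decomp ord dim A r' -> (r <= r')%nat.

(** Vandermonde vector (a^{n-1}, a^{n-2} b, ..., b^{n-1}), 1-based: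
    entry i is a^{n-i} b^{i-1}. *)
Definition vdm (dim : nat) (a b : Cx) : nat -> Cx :=
  fun i => Cmul (Cpow a (dim - i)) (Cpow b (i - 1)).

Definition vdm_decomp (ord dim : nat) (H : tensor) (r : nat) : Prop :=
  exists a b : nat -> Cx, teq ord dim H (tsum r (fun i => tpow (vdm dim (a i) (b i)))).

Definition is_rank_V (ord dim : nat) (H : tensor) (r : nat) : Prop :=
  vdm_decomp ord dim H r /\ forall r', vdm_decomp ord dim H r' -> (r <= r')%nat.

Definition tconv (ord dim : nat) (T : nat -> tensor) (A : tensor) : Prop :=
  forall l, valid_index ord dim l ->
    forall eps, eps > 0 -> exists N, forall k, (k >= N)%nat ->
      Cnorm (Cadd (T k l) (Copp (A l))) < eps.

Definition sym_border (ord dim : nat) (A : tensor) (r : nat) : Prop :=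
  exists T : nat -> tensor, (forall k, sym_decomp ord dim (T k) r) /\ tconv ord dim T A.

Definition is_border_rank_S (ord dim : nat) (A : tensor) (r : nat) : Prop :=
  sym_border ord dim A r /\ forall r', sym_border ord dim A r' -> (r <= r')%nat.

Definition vdm_border (ord dim : nat) (H : tensor) (r : nat) : Prop :=
  exists T : nat -> tensor,
    (forall k, is_hankel ord dim (T k) /\
               exists r', is_rank_V ord dim (T k) r' /\ (r' <= r)%nat)
    /\ tconv ord dim T H.

Definition is_border_rank_V (ord dim : nat) (H : tensor) (r : nat) : Prop :=
  vdm_border ord dim H r /\ forall r', vdm_border ord dim H r' -> (r <= r')%nat.

Definition binary_tensor (h : nat -> Cx) : tensor :=
  fun l => h (count_occ Nat.eq_dec l 1%nat).

(* Main.v *)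
Require Import Defs.
From Stdlib Require Import Reals List Arith Lia Lra Classical.
Import ListNotations.
Open Scope R_scope.

Lemma Cmul_comm z w : Cmul z w = Cmul w z.
Proof. destruct z, w; unfold Cmul; simpl; f_equal; ring. Qed.
Lemma Cmul_assoc z w v : Cmul z (Cmul w v) = Cmul (Cmul z w) v.
Proof. destruct z, w, v; unfold Cmul; simpl; f_equal; ring. Qed.
Lemma Cmul_1_l z : Cmul Defs.C1 z = z.
Proof. destruct z; unfold Cmul, Defs.C1; simpl; f_equal; ring. Qed.
Lemma Cmul_0_l z : Cmul Defs.C0 z = Defs.C0.
Proof. destruct z; unfold Cmul, Defs.C0; simpl; f_equal; ring. Qed.
Lemma Cmul_0_r z : Cmul z Defs.C0 = Defs.C0.
Proof. rewrite Cmul_comm; apply Cmul_0_l. Qed.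
Lemma Cadd_0_r z : Cadd z Defs.C0 = z.
Proof. destruct z; unfold Cadd, Defs.C0; simpl; f_equal; ring. Qed.
Lemma Cpow_add z p q : Cpow z (p + q) = Cmul (Cpow z p) (Cpow z q).
Proof. induction p; simpl. now rewrite Cmul_1_l. rewrite IHp. apply Cmul_assoc. Qed.
Lemma Cpow_0 p : (p > 0)%nat -> Cpow Defs.C0 p = Defs.C0.
Proof. destruct p; [lia|]. intros; simpl; apply Cmul_0_l. Qed.

Lemma mul4 a b c d : Cmul (Cmul a b) (Cmul c d) = Cmul (Cmul a c) (Cmul b d).
Proof.
  rewrite <- !Cmul_assoc. f_equal. rewrite !Cmul_assoc. f_equal. apply Cmul_comm.
Qed.

Lemma Csum_ext r f g : (forall i, (i < r)%nat -> f i = g i) -> Csum r f = Csum r g.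
Proof. induction r; intros E; simpl; auto. rewrite IHr by (intros; apply E; lia). rewrite E by lia. auto. Qed.

Lemma bounds n l : Forall (fun i => (1 <= i <= n)%nat) l ->
  (length l <= list_sum l <= n * length l)%nat.
Proof. induction 1; simpl; lia. Qed.

Lemma prodV n a b l : Forall (fun i => (1 <= i <= n)%nat) l ->
  Cprod_list l (vdm n a b) =
  Cmul (Cpow a (n * length l - list_sum l)) (Cpow b (list_sum l - length l)).
Proof.
  intros HF; induction HF as [|i l Hi HF IH]; simpl.
  - rewrite Nat.mul_0_r; simpl. now rewrite Cmul_1_l.
  - rewrite IH. unfold vdm. rewrite mul4, <- !Cpow_add.
    pose proof (bounds n l HF).
    f_equal; f_equal; nia.
Qed.

Lemma prodB (u : nat -> Cx) l : Forall (fun i => (1 <= i <= 2)%nat) l ->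
  Cprod_list l u =
  Cmul (Cpow (u 2%nat) (length l - count_occ Nat.eq_dec l 1%nat))
       (Cpow (u 1%nat) (count_occ Nat.eq_dec l 1%nat)).
Proof.
  intros HF; induction HF as [|i l Hi HF IH].
  - simpl. now rewrite Cmul_1_l.
  - cbn [Cprod_list length]. pose proof (count_occ_bound Nat.eq_dec 1%nat l).
    rewrite IH. assert (i = 1 \/ i = 2)%nat as [-> | ->] by lia.
    + rewrite count_occ_cons_eq by auto.
      replace (S (length l) - S (count_occ Nat.eq_dec l 1))%nat
        with (length l - count_occ Nat.eq_dec l 1)%nat by lia.
      simpl. rewrite !Cmul_assoc. f_equal. apply Cmul_comm.
    + rewrite count_occ_cons_neq by lia.
      replace (S (length l) - count_occ Nat.eq_dec l 1)%nat
        with (S (length l - count_occ Nat.eq_dec l 1))%nat by lia.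
      simpl. apply Cmul_assoc.
Qed.

Definition F (d r : nat) (a b : nat -> Cx) (j : nat) : Cx :=
  Csum r (fun i => Cmul (Cpow (a i) (d - j)) (Cpow (b i) j)).

Lemma LV m n r a b l : valid_index m n l ->
  tsum r (fun i => tpow (vdm n (a i) (b i))) l = F ((n-1)*m) r a b (list_sum l - m).
Proof.
  intros [Hl HF]. unfold tsum, F. apply Csum_ext. intros i _.
  unfold tpow. rewrite prodV by auto. pose proof (bounds n l HF).
  rewrite Nat.mul_sub_distr_r. f_equal; f_equal; subst; nia.
Qed.

Lemma LB d r (u : nat -> nat -> Cx) l : valid_index d 2 l ->
  tsum r (fun i => tpow (u i)) l =
  F d r (fun i => u i 2%nat) (fun i => u i 1%nat) (count_occ Nat.eq_dec l 1%nat).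
Proof.
  intros [Hl HF]. unfold tsum, F. apply Csum_ext. intros i _.
  unfold tpow. rewrite prodB by auto. now subst.
Qed.

Fixpoint lV (n m j : nat) : list nat :=
  match m with
  | O => []
  | S m' => if (j <=? (n-1)*m')%nat then 1%nat :: lV n m' j else (j - (n-1)*m' + 1)%nat :: lV n m' ((n-1)*m')
  end.

Lemma lV_spec n m j : (1 <= n)%nat -> (j <= (n-1)*m)%nat ->
  valid_index m n (lV n m j) /\ list_sum (lV n m j) = (m + j)%nat.
Proof.
  intros Hn; revert j; induction m; intros j Hj; simpl.
  - split; [split; auto|]. lia.
  - destruct (Nat.leb_spec j ((n-1)*m)).
    + destruct (IHm j H) as [[L F'] S']. split; [split; [simpl; auto | constructor; auto; lia] | simpl; lia].
    + destruct (IHm ((n-1)*m)%nat (le_n _)) as [[L F'] S']. split; [split; [simpl; auto | constructor; auto; lia] | simpl; lia].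
Qed.

Fixpoint lB (d j : nat) : list nat :=
  match d with
  | O => []
  | S d' => if (j <=? d')%nat then 2%nat :: lB d' j else 1%nat :: lB d' (j - 1)
  end.

Lemma lB_spec d j : (j <= d)%nat ->
  valid_index d 2 (lB d j) /\ count_occ Nat.eq_dec (lB d j) 1%nat = j.
Proof.
  revert j; induction d; intros j Hj; simpl.
  - split; [split; auto|]. lia.
  - destruct (Nat.leb_spec j d).
    + destruct (IHd j H) as [[L F'] S']. split; [split; [simpl; auto | constructor; auto; lia] |].
      rewrite count_occ_cons_neq by lia. auto.
    + destruct (IHd (j-1)%nat ltac:(lia)) as [[L F'] S']. split; [split; [simpl; auto | constructor; auto; lia] |].
      rewrite count_occ_cons_eq by auto. lia.
Qed.
Lemma min_exists (P : nat -> Prop) r : P r ->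
  exists r', (P r' /\ forall r'', P r'' -> (r' <= r'')%nat) /\ (r' <= r)%nat.
Proof.
  induction r as [r IH] using (well_founded_induction lt_wf). intros Pr.
  destruct (classic (exists r'', (r'' < r)%nat /\ P r'')) as [[r'' [Hlt Pr'']]|N].
  - destruct (IH r'' Hlt Pr'') as [r' [A B]]. exists r'. split; auto; lia.
  - exists r. split; [split; auto|lia]. intros r'' Pr''.
    destruct (Nat.le_gt_cases r r''); auto. exfalso; apply N; eauto.
Qed.


Section Main.
Variables (m n : nat) (Hm : (1 <= m)%nat) (Hn : (2 <= n)%nat).
Let d := ((n - 1) * m)%nat.
Lemma d_pos : (1 <= d)%nat.
Proof. unfold d; nia. Qed.

Lemma lVd j : (j <= d)%nat -> valid_index m n (lV n m j) /\ (list_sum (lV n m j) - m = j)%nat.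
Proof. intros Hj. destruct (lV_spec n m j) as [A B]; unfold d in *; try lia. split; auto; lia. Qed.

Lemma sum_le l : valid_index m n l -> (list_sum l - m <= d)%nat.
Proof. intros [L F']. pose proof (bounds n l F'). unfold d. rewrite Nat.mul_sub_distr_r. subst; nia. Qed.

Lemma count_le l : valid_index d 2 l -> (count_occ Nat.eq_dec l 1%nat <= d)%nat.
Proof. intros [L _]. rewrite <- L. apply count_occ_bound. Qed.

Lemma keyV (T : tensor) (g : nat -> Cx) r a b :
  (forall l, valid_index m n l -> T l = g (list_sum l - m)%nat) ->
  (teq m n T (tsum r (fun i => tpow (vdm n (a i) (b i)))) <->
   forall j, (j <= d)%nat -> g j = F d r a b j).
Proof.
  intros HT; split.
  - intros E j Hj. destruct (lVd j Hj) as [V S].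
    rewrite <- S at 1. rewrite <- HT by auto. rewrite E by auto. rewrite (LV m n) by auto.
    now rewrite S.
  - intros E l Hl. rewrite HT, (LV m n) by auto. apply E. now apply sum_le.
Qed.

Lemma keyB (T : tensor) (g : nat -> Cx) r u :
  (forall l, valid_index d 2 l -> T l = g (count_occ Nat.eq_dec l 1%nat)) ->
  (teq d 2 T (tsum r (fun i => tpow (u i))) <->
   forall j, (j <= d)%nat -> g j = F d r (fun i => u i 2%nat) (fun i => u i 1%nat) j).
Proof.
  intros HT; split.
  - intros E j Hj. destruct (lB_spec d j Hj) as [V S].
    rewrite <- S at 1. rewrite <- HT by auto. rewrite E by auto. rewrite (LB d) by auto.
    now rewrite S.
  - intros E l Hl. rewrite HT, (LB d) by auto. apply E. now apply count_le.
Qed.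

Definition mku (a b : nat -> Cx) : nat -> nat -> Cx :=
  fun i k => if Nat.eqb k 1 then b i else a i.

Lemma decomp_equiv (T S : tensor) (g : nat -> Cx) r :
  (forall l, valid_index m n l -> T l = g (list_sum l - m)%nat) ->
  (forall l, valid_index d 2 l -> S l = g (count_occ Nat.eq_dec l 1%nat)) ->
  (vdm_decomp m n T r <-> sym_decomp d 2 S r).
Proof.
  intros HT HS; split.
  - intros [a [b E]]. exists (mku a b).
    apply (proj2 (keyB S g r (mku a b) HS)). exact (proj1 (keyV T g r a b HT) E).
  - intros [u E]. exists (fun i => u i 2%nat), (fun i => u i 1%nat).
    apply (proj2 (keyV T g r _ _ HT)). exact (proj1 (keyB S g r u HS) E).
Qed.

Lemma F_pad r' r a b j : (r' <= r)%nat -> (j <= d)%nat ->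
  F d r (fun i => if (i <? r')%nat then a i else Defs.C0)
        (fun i => if (i <? r')%nat then b i else Defs.C0) j = F d r' a b j.
Proof.
  intros Hr Hj. induction Hr.
  - unfold F. apply Csum_ext. intros i Hi. destruct (Nat.ltb_spec i r'); [auto|lia].
  - unfold F in *. simpl. rewrite IHHr. destruct (Nat.ltb_spec m0 r'); [lia|].
    pose proof d_pos. destruct (Nat.eq_dec j 0) as [->|].
    + rewrite (Cpow_0 (d - 0)) by lia. rewrite Cmul_0_l. apply Cadd_0_r.
    + rewrite (Cpow_0 j) by lia. rewrite Cmul_0_r. apply Cadd_0_r.
Qed.

Lemma vdm_pad T r' r : (r' <= r)%nat -> vdm_decomp m n T r' -> vdm_decomp m n T r.
Proof.
  intros Hr [a [b E]].
  exists (fun i => if (i <? r')%nat then a i else Defs.C0),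
         (fun i => if (i <? r')%nat then b i else Defs.C0).
  intros l Hl. rewrite E by auto. rewrite !(LV m n) by auto.
  symmetry. apply F_pad; auto. now apply sum_le.
Qed.

End Main.

Theorem lemma3p2 (m n : nat) (Hm : (1 <= m)%nat) (Hn : (2 <= n)%nat)
  (H : tensor) (h : nat -> Cx) (hH : is_hankel_with m n H h) :
  (forall r, is_rank_V m n H r <-> is_rank_S ((n - 1) * m) 2 (binary_tensor h) r) /\
  (forall r, is_border_rank_V m n H r <->
             is_border_rank_S ((n - 1) * m) 2 (binary_tensor h) r).
Proof.
  set (d := ((n - 1) * m)%nat).
  assert (HB : forall l, valid_index d 2 l -> binary_tensor h l = h (count_occ Nat.eq_dec l 1%nat))
    by (intros; reflexivity).
  assert (DE : forall r, vdm_decomp m n H r <-> sym_decomp d 2 (binary_tensor h) r)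
    by (intro r; exact (decomp_equiv m n Hm Hn H _ h r hH HB)).
  assert (BE : forall r, vdm_border m n H r <-> sym_border d 2 (binary_tensor h) r).
  { intro r; split.
    - intros [T [HT Hc]].
      exists (fun k l => T k (lV n m (count_occ Nat.eq_dec l 1%nat))). split.
      + intro k. destruct (HT k) as [[h' Hh'] [r' [[Hd _] Hle]]].
        apply (vdm_pad m n Hm Hn _ r' r Hle) in Hd.
        assert (HS : forall l, valid_index d 2 l ->
           T k (lV n m (count_occ Nat.eq_dec l 1%nat)) = h' (count_occ Nat.eq_dec l 1%nat)).
        { intros l Hl. rewrite Hh' by (apply (lVd m n Hm Hn); now apply (count_le m n)).
          f_equal. apply (lVd m n Hm Hn); now apply (count_le m n). }
        exact (proj1 (decomp_equiv m n Hm Hn (T k) _ h' r Hh' HS) Hd).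
      + intros l Hl eps He.
        assert (Hj : (count_occ Nat.eq_dec l 1 <= d)%nat) by (now apply (count_le m n)).
        destruct (lVd m n Hm Hn _ Hj) as [V S].
        destruct (Hc _ V eps He) as [N HN]. exists N. intros k Hk.
        specialize (HN k Hk). rewrite hH, S in HN by auto. exact HN.
    - intros [S [HS Hc]].
      exists (fun k l => S k (lB d (list_sum l - m))). split.
      + intro k. split.
        * exists (fun j => S k (lB d j)). intros l _. reflexivity.
        * assert (Hd : vdm_decomp m n (fun l => S k (lB d (list_sum l - m))) r).
          { assert (HS' : forall l, valid_index d 2 l ->
                S k l = S k (lB d (count_occ Nat.eq_dec l 1%nat))).
            { intros l Hl. destruct (HS k) as [u E].
              assert (Hj : (count_occ Nat.eq_dec l 1 <= d)%nat) by (now apply (count_le m n)).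
              destruct (lB_spec d _ Hj) as [V C].
              rewrite (E l Hl), (E _ V), !(LB d) by auto. now rewrite C. }
            destruct (HS k) as [u E].
            apply (proj2 (decomp_equiv m n Hm Hn _ (S k) (fun j => S k (lB d j)) r
                      ltac:(intros; reflexivity) HS')). exists u; exact E. }
          destruct (min_exists _ r Hd) as [r' [A B]]. exists r'. split; auto.
      + intros l Hl eps He.
        assert (Hj : (list_sum l - m <= d)%nat) by (now apply (sum_le m n)).
        destruct (lB_spec d _ Hj) as [V C].
        destruct (Hc _ V eps He) as [N HN]. exists N. intros k Hk.
        specialize (HN k Hk). rewrite HB, C in HN by auto. rewrite hH by auto. exact HN. }
  split; intro r; split.
  - intros [A B]. split; [now apply DE|]. intros r' Hr'. apply B, DE, Hr'.
  - intros [A B]. split; [now apply DE|]. intros r' Hr'. apply B, DE, Hr'.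
  - intros [A B]. split; [now apply BE|]. intros r' Hr'. apply B, BE, Hr'.
  - intros [A B]. split; [now apply BE|]. intros r' Hr'. apply B, BE, Hr'.
Qed.
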